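(* Let $\mathsf{G}$ be a connected undirected graph on $N=\{1,\dots,n\}$ with edge set $E$ and symmetric positive edge weights $w_{ij}=w_{ji}>0$, let $\mathbf{L}$ be its Laplacian, and consider $\dot{\bm{x}}=-\mathbf{L}\bm{x}$ on $M(\mathsf{a})=\{\bm{x}\in\mathbb{R}^n_{>0}:\frac1n\sum_i x_i=\mathsf{a}\}$ with $\mathsf{a}>0$ (the equilibrium value of each $x_i$). Set $\bm{\rho}=\bm{x}/\mathsf{a}$ and $H_{\mathrm{Gibbs}}(\rho)=\rho(\log\rho-1)$. Then $$V_{\mathrm{Gibbs}}(\bm{x})=\mathsf{a}\sum_{i=1}^n H_{\mathrm{Gibbs}}(\rho_i)=\sum_{i=1}^n x_i\Big(\log\frac{x_i}{\mathsf{a}}-1\Big)$$ is a strict Lyapunov function, and for every $\bm{x}\in M(\mathsf{a})$, $$-\mathbf{L}\bm{x}=-\mathbf{G}^{-1}_{\mathrm{Gibbs}}(\bm{x})\nabla V_{\mathrm{Gibbs}}(\bm{x}),$$ where $\mathbf{G}^{-1}_{\mathrm{Gibbs}}(\bm{x})$ is the Laplacian of $\mathsf{G}$ with state-dependent edge weights $\mathsf{a}\,w_{ij}\,\Lambda(\rho_i,\rho_j)$, $\Lambda(a,b)=\dfrac{a-b}{\log a-\log b}$ for $a\ne b$ and $\Lambda(a,a)=a$ (the logarithmic mean); i.e. $[\mathbf{G}^{-1}_{\mathrm{Gibbs}}(\bm{x})]_{ij}=-\mathsf{a}w_{ij}\Lambda(\rho_i,\rho_j)$ for $\{i,j\}\in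 E$, $0$ for other $i\ne j$, and $[\mathbf{G}^{-1}_{\mathrm{Gibbs}}(\bm{x})]_{ii}=\sum_{j:\{i,j\}\in E}\mathsf{a}w_{ij}\Lambda(\rho_i,\rho_j)$.
   Context: The Laplacian of the weighted undirected graph is $\mathbf{L}=[l_{ij}]$ with $l_{ij}=-w_{ij}$ for $\{i,j\}\in E$, $l_{ij}=0$ for other $i\ne j$, $l_{ii}=\sum_{j:\{i,j\}\in E}w_{ij}$. A strict Lyapunov function is a function $V$ such that along every trajectory whose initial state is not a consensus vector $c\bm{1}$, $V(\bm{x}(t))<V(\bm{x}(0))$ for all $0<t<\infty$. $\nabla$ denotes the Euclidean gradient in $\bm{x}$. *)

(* Defs.v *)
From HB Require Import structures.
From mathcomp Require Import all_boot all_order all_algebra.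
From mathcomp Require Import all_classical all_reals all_analysis.
Set Implicit Arguments. Unset Strict Implicit. Unset Printing Implicit Defensive.
Import Order.TTheory GRing.Theory Num.Theory.
Import numFieldNormedType.Exports.
Local Open Scope ring_scope.
Local Open Scope classical_set_scope.

(* A finite simple undirected graph on 'I_n (vertices {1..n} reindexed). *)
Definition simple_graph n (e : rel 'I_n) : Prop :=
  (forall i j, e i j = e j i) /\ (forall i, ~~ e i i).

Definition connected_graph n (e : rel 'I_n) : Prop :=
  forall i j, connect e i j.

Definition edge_weights (R : realType) n (e : rel 'I_n) (w : 'I_n -> 'I_n -> R) : Prop :=
  (forall i j, w i j = w j i) /\ (forall i j, e i j -> 0 < w i j).

Definition laplacian (R : realType) n (e : rel 'I_n) (w : 'I_n -> 'I_n -> R) : 'M[R]_n :=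
  \matrix_(i, j) (if i == j then \sum_(k | e i k) w i k
                  else if e i j then - w i j else 0).

Definition Mset (R : realType) n (a : R) : set 'cV[R]_n :=
  [set x | (forall i, 0 < x i 0) /\ (n%:R)^-1 * \sum_i x i 0 = a].

Definition consensus (R : realType) n (x : 'cV[R]_n) : Prop :=
  exists c : R, x = const_mx c.

Definition trajectory (R : realType) n (L : 'M[R]_n) (x : R -> 'cV[R]_n) : Prop :=
  {within `[0, +oo[, continuous x} /\
  (forall t : R, 0 < t -> derivable x t 1 /\ x^`() t = - (L *m x t)).

Definition strict_lyapunov (R : realType) n (L : 'M[R]_n) (a : R)
  (V : 'cV[R]_n -> R) : Prop :=
  forall x : R -> 'cV[R]_n, trajectory L x -> @Mset R n a (x 0) -> ~ consensus (x 0) ->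
    forall t : R, 0 < t -> V (x t) < V (x 0).

Definition Hgibbs (R : realType) (r : R) : R := r * (ln r - 1).

Definition Vgibbs (R : realType) n (a : R) (x : 'cV[R]_n) : R :=
  a * \sum_i Hgibbs (x i 0 / a).

Definition logmean (R : realType) (p q : R) : R :=
  if p == q then p else (p - q) / (ln p - ln q).

Definition grad (R : realType) n (V : 'cV[R]_n -> R) (x : 'cV[R]_n) : 'cV[R]_n :=
  \col_i ('D_(delta_mx i 0) V x).

Definition Ginv_gibbs (R : realType) n (e : rel 'I_n) (w : 'I_n -> 'I_n -> R) (a : R)
  (x : 'cV[R]_n) : 'M[R]_n :=
  laplacian e (fun i j => a * w i j * logmean (x i 0 / a) (x j 0 / a)).

(* Main.v *)
Require Import Defs.
From HB Require Import structures.
From mathcomp Require Import all_boot all_order all_algebra.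
From mathcomp Require Import all_classical all_reals all_analysis.
From mathcomp Require Import ring lra.
Import Order.TTheory GRing.Theory Num.Theory.
Import numFieldNormedType.Exports.
Local Open Scope ring_scope.
Local Open Scope classical_set_scope.
Set Implicit Arguments. Unset Strict Implicit. Unset Printing Implicit Defensive.

Section S.
Variable R : realType.

Lemma Hgibbs_der (r : R) : 0 < r -> is_derive r 1 (@Hgibbs R) (ln r).
Proof.
move=> r0.
have -> : @Hgibbs R = (fun x => x) * (fun x => ln x - 1).
  by apply/funext => x; rewrite /Hgibbs.
have h1 : is_derive r 1 (fun x : R => ln x - 1) (r^-1).
  have := @is_deriveB R R R (@ln R) (cst 1) r 1 r^-1 0 (is_derive1_ln r0) _.
  rewrite subr0 => H; exact: H.
have := @is_deriveM R R (fun x => x) (fun x : R => ln x - 1) r 1 1 r^-1 _ h1.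
move=> H; apply: (is_derive_eq (H (is_derive_id _ _))).
rewrite /GRing.scale /= mulr1 mulfV ?gt_eqF //; lra.
Qed.

Lemma growth_coord (f : R -> R) n (y v : 'cV[R]_n) k (a : R) :
  (fun h : R => h^-1 *: (((fun z : 'cV[R]_n => f (z k 0 / a)) \o shift y) (h *: v)
      - f (y k 0 / a))) =
  (fun h : R => h^-1 *: ((f \o shift (y k 0 / a)) (h *: (v k 0 / a)) - f (y k 0 / a))).
Proof.
apply/funext => h /=; rewrite !mxE; congr (_ *: (f _ - _)).
by rewrite /GRing.scale /= mulrDl mulrA.
Qed.

Lemma is_derive_coord (f : R -> R) n (y v : 'cV[R]_n) k (a df : R) :
  is_derive (y k 0 / a) 1 f df ->
  is_derive y v (fun z => f (z k 0 / a)) ((v k 0 / a) * df).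
Proof.
move=> [fd fv].
have dif : differentiable f (y k 0 / a) by apply/derivable1_diffP.
have dc : derivable f (y k 0 / a) (v k 0 / a) by apply: diff_derivable.
apply: DeriveDef.
  by rewrite /derivable growth_coord.
rewrite /derive growth_coord -/(derive f _ _) deriveE // deriv1E //.
by rewrite derive1E fv.
Qed.

Lemma VgibbsE n (a : R) :
  @Vgibbs R n a = a \*: \sum_(k < n) (fun z : 'cV[R]_n => Hgibbs (z k 0 / a)).
Proof.
apply/funext => z; rewrite /Vgibbs /=; congr (_ * _).
by rewrite fct_sumE.
Qed.

Lemma DV n (a : R) (y v : 'cV[R]_n) : 0 < a -> (forall k, 0 < y k 0) ->
  is_derive y v (@Vgibbs R n a) (\sum_k ln (y k 0 / a) * v k 0).
Proof.
move=> a0 yp; rewrite VgibbsE.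
have hk : forall k, is_derive y v (fun z : 'cV[R]_n => Hgibbs (z k 0 / a))
     ((v k 0 / a) * ln (y k 0 / a)).
  by move=> k; apply: is_derive_coord; apply: Hgibbs_der; rewrite divr_gt0.
have := @is_deriveZ R _ R _ a y v _ (is_derive_sum hk).
move=> H; apply: (is_derive_eq H); rewrite /GRing.scale /= mulr_sumr.
apply: eq_bigr => k _; field; exact: lt0r_neq0.
Qed.

Lemma DV_diff n (a : R) (y : 'cV[R]_n) : 0 < a -> (forall k, 0 < y k 0) ->
  differentiable (@Vgibbs R n a) y.
Proof.
move=> a0 yp; rewrite VgibbsE; apply: differentiableZ.
apply: differentiable_sum => k.
have -> : (fun z : 'cV[R]_n => Hgibbs (z k 0 / a)) =
   (@Hgibbs R) \o (fun z : 'cV[R]_n => z k 0 / a) by [].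
apply: differentiable_comp.
  have -> : (fun z : 'cV[R]_n => z k 0 / a) = (fun z : 'cV[R]_n => z k 0) * cst a^-1 by [].
  by apply: differentiableM => //; exact: differentiable_coord.
apply/derivable1_diffP; have := Hgibbs_der (divr_gt0 (yp k) a0).
by case.
Qed.

Lemma lap_apply n (e : rel 'I_n) (W : 'I_n -> 'I_n -> R) (v : 'cV[R]_n) i :
  ~~ e i i ->
  (laplacian e W *m v) i 0 = \sum_(k | e i k) W i k * (v i 0 - v k 0).
Proof.
move=> nii.
rewrite mxE (bigD1 i) //= !mxE eqxx.
under eq_bigr => k /negPf ki do rewrite !mxE eq_sym ki.
under [RHS]eq_bigr => k _ do rewrite mulrBr.
rewrite sumrB mulr_suml; congr (_ + _).
rewrite -sumrN big_mkcond [RHS]big_mkcond [in RHS](bigD1 i) //= (negPf nii) ?oppr0 add0r.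
rewrite [RHS]big_mkcond; apply: eq_bigr => k _.
by case: (k != i); case: (e i k); rewrite ?mulNr ?mul0r.
Qed.

Lemma within_comp (T U W : topologicalType) (A B : set T) (f : T -> U) (g : U -> W) :
  A `<=` B -> {within B, continuous f} ->
  (forall s, A s -> {for f s, continuous g}) -> {within A, continuous (g \o f)}.
Proof.
move=> AB cf cg; apply/subspace_continuousP => s As.
have cf' := continuous_subspaceW AB cf.
have := (subspace_continuousP _ _).1 cf' s As => fcv.
exact: cvg_comp fcv (cg s As).
Qed.

Lemma within_mul (A : set R) (f g : R -> R) :
  {within A, continuous f} -> {within A, continuous g} ->
  {within A, continuous (fun s => f s * g s)}.
Proof.
move=> cf cg; apply/subspace_continuousP => s As.
have := (subspace_continuousP _ _).1 cf s As => fcv.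
have := (subspace_continuousP _ _).1 cg s As => gcv.
exact: cvgM.
Qed.

Lemma traj_coord n (L : 'M[R]_n) (x : R -> 'cV[R]_n) i t :
  trajectory L x -> 0 < t ->
  derivable (fun s => x s i 0) t 1 /\
  (fun s => x s i 0)^`() t = - (L *m x t) i 0.
Proof.
move=> [_ hd] t0; have [dx dv] := hd t t0.
have dc := (derivable_mxP _ _ _).1 dx i 0.
split => //.
transitivity ((x^`() t) i 0); last by rewrite dv mxE.
by rewrite !derive1E derive_mx // mxE.
Qed.

Lemma traj_cont n (L : 'M[R]_n) (x : R -> 'cV[R]_n) i :
  trajectory L x -> {within `[0, +oo[, continuous (fun s => x s i 0)}.
Proof.
move=> [cx _].
have -> : (fun s => x s i 0) = (fun M : 'cV[R]_n => M i 0) \o x by [].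
apply: within_comp cx _ => // s _.
apply: differentiable_continuous; exact: differentiable_coord.
Qed.

Lemma traj_pos n (e : rel 'I_n) (w : 'I_n -> 'I_n -> R) (x : R -> 'cV[R]_n) :
  simple_graph e -> edge_weights e w -> trajectory (laplacian e w) x ->
  (forall i, 0 < x 0 i 0) -> forall s, 0 <= s -> forall i, 0 < x s i 0.
Proof.
move=> [esym eirr] [wsym wpos] tr x0p.
case: (pselect (exists s, 0 <= s /\ exists i, x s i 0 <= 0)); last first.
  move=> hn s s0 i; rewrite ltNge; apply/negP => h; apply: hn.
  by exists s; split => //; exists i.
move=> hex; exfalso.
set K := [set s | 0 <= s /\ exists i, x s i 0 <= 0].
have Kne : K !=set0 by case: hex => s hs; exists s.
have Klb : has_lbound K by exists 0 => s [].
set T := inf K.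
have T0 : 0 <= T by apply: lb_le_inf => // s [].
have Tlow : forall s, 0 <= s -> s < T -> forall i, 0 < x s i 0.
  move=> s s0 sT i; rewrite ltNge; apply/negP => h.
  have Ks : K s by split => //; exists i.
  by have := ge_inf Klb Ks; rewrite leNgt sT.
have [i Ti] : exists i, x T i 0 <= 0.
  case: (pselect (exists i, x T i 0 <= 0)) => // hn; exfalso.
  have hp : forall i, 0 < x T i 0.
    by move=> i; rewrite ltNge; apply/negP => h; apply: hn; exists i.
  have hnear : \forall s \near within `[0, +oo[ (nbhs T), forall i, 0 < x s i 0.
    apply: filter_forall => i.
    have cT := (subspace_continuousP _ _).1 (@traj_cont _ _ _ i tr) T.
    have := cT _; rewrite /= in_itv /= T0 => /(_ isT) cv.
    move: cv; rewrite /from_subspace => cv.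
    exact: (cvgr_gt _ cv _ (hp i)).
  move: hnear; rewrite near_withinE => /nbhs_ballP [d /= d0 Hd].
  have [k Kk kT] := inf_adherent d0 (conj Kne Klb).
  have Tk := ge_inf Klb Kk.
  case: Kk => k0 [j kj].
  have := Hd k; rewrite /ball /= distrC ger0_norm ?subr_ge0 // => H.
  have : 0 < x k j 0.
    apply: H; first by move: kT; rewrite /T; lra.
    by rewrite in_itv /= k0.
  by rewrite ltNge kj.
have Tpos : 0 < T.
  rewrite lt_neqAle T0 andbT; apply/eqP => T0e.
  by move: Ti; rewrite -T0e leNgt x0p.
set d := \sum_(k | e i k) w i k.
set f := fun s : R => expR (d * s).
have fd : forall s : R, is_derive s 1 f (expR (d * s) * d).
  move=> s.
  have -> : f = expR \o (fun s : R => d * s) by [].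
  apply: is_derive1_comp.
  have -> : (fun s : R => d * s) = d \*: id by apply/funext.
  have := is_deriveZ d (is_derive_id s (1:R)).
  by rewrite /GRing.scale /= mulr1.
set y := f * (fun s => x s i 0).
have yd : forall s : R, 0 < s -> s < T -> is_derive s 1 y
   (expR (d * s) * \sum_(k | e i k) w i k * x s k 0).
  move=> s s0 sT.
  have [dx dv] := traj_coord i tr s0.
  have hx : is_derive s 1 (fun s => x s i 0) (- (laplacian e w *m x s) i 0).
    by rewrite -dv derive1E; exact: derivableP dx.
  have := is_deriveM (fd s) hx; rewrite /y => H; apply: (is_derive_eq H).
  rewrite lap_apply // /GRing.scale /= /f.
  under eq_bigr do rewrite mulrBr.
  rewrite sumrB -mulr_suml -/d; ring.
have ycont : {within `[0, T], continuous y}.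
  apply: within_mul.
    apply: continuous_subspaceT => s.
    have [df _] := fd s.
    exact/differentiable_continuous/derivable1_diffP.
  apply: continuous_subspaceW (@traj_cont _ _ _ i tr).
  by move=> s; rewrite /= !in_itv /= => /andP [->].
have := @ger0_derive1_ndecr R y 0 T _ _ ycont 0 T (lexx _) T0 (lexx _).
have yE : forall s, y s = expR (d * s) * x s i 0 by [].
move=> H.
have : y 0 <= y T.
  apply: H.
    by move=> s; rewrite in_itv /= => /andP [s0 sT]; case: (yd s s0 sT).
  move=> s; rewrite in_itv /= => /andP [s0 sT].
  rewrite derive1E (@derive_val _ _ _ _ _ _ _ (yd s s0 sT)).
  apply: mulr_ge0; first exact: ltW (expR_gt0 _).
  apply: sumr_ge0 => k ek; apply: mulr_ge0; first exact: ltW (wpos _ _ ek).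
  exact: ltW (Tlow s (ltW s0) sT k).
rewrite !yE mulr0 expR0 mul1r => H2.
have := lt_le_trans (x0p i) H2.
by rewrite pmulr_rgt0 ?expR_gt0 // ltNge Ti.
Qed.

Lemma term_ge0 (a p q : R) : 0 < a -> 0 < p -> 0 < q ->
  0 <= (p - q) * (ln (p / a) - ln (q / a)).
Proof.
move=> a0 p0 q0.
have pa : p / a \in Num.pos by rewrite posrE divr_gt0.
have qa : q / a \in Num.pos by rewrite posrE divr_gt0.
case: (lerP p q) => pq.
  apply: mulr_le0; first by rewrite subr_le0.
  by rewrite subr_le0 ler_ln // ler_pM2r ?invr_gt0.
apply: mulr_ge0; first by rewrite subr_ge0 ltW.
by rewrite subr_ge0 ler_ln // ler_pM2r ?invr_gt0 // ltW.
Qed.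

Lemma term_eq0 (a p q : R) : 0 < a -> 0 < p -> 0 < q ->
  (p - q) * (ln (p / a) - ln (q / a)) = 0 -> p = q.
Proof.
move=> a0 p0 q0 /eqP; rewrite mulf_eq0 => /orP [|].
  by rewrite subr_eq0 => /eqP.
rewrite subr_eq0 => /eqP /ln_inj H.
have : p / a = q / a by apply: H; rewrite posrE divr_gt0.
by move/(congr1 (fun z => z * a)); rewrite !divfK ?gt_eqF.
Qed.

Definition diss n (e : rel 'I_n) (w : 'I_n -> 'I_n -> R) (a : R) (v : 'cV[R]_n) :=
  \sum_k ln (v k 0 / a) * (laplacian e w *m v) k 0.

Lemma diss2 n (e : rel 'I_n) (w : 'I_n -> 'I_n -> R) (a : R) (v : 'cV[R]_n) :
  simple_graph e -> edge_weights e w ->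
  diss e w a v *+ 2 = \sum_k \sum_j (if e k j then
      w k j * ((v k 0 - v j 0) * (ln (v k 0 / a) - ln (v j 0 / a))) else 0).
Proof.
move=> [esym eirr] [wsym wpos].
have E1 : diss e w a v = \sum_k \sum_j (if e k j then
      w k j * ((v k 0 - v j 0) * ln (v k 0 / a)) else 0).
  rewrite /diss; apply: eq_bigr => k _.
  rewrite lap_apply // mulr_sumr big_mkcond; apply: eq_bigr => j _.
  case: (e k j) => //; ring.
have E2 : diss e w a v = \sum_k \sum_j (if e k j then
      w k j * ((v j 0 - v k 0) * ln (v j 0 / a)) else 0).
  rewrite E1 exchange_big; apply: eq_bigr => k _; apply: eq_bigr => j _.
  by rewrite esym wsym.
rewrite mulr2n {1}E1 E2 -big_split; apply: eq_bigr => k _.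
rewrite -big_split; apply: eq_bigr => j _.
rewrite /=; case: (e k j); last by rewrite addr0.
ring.
Qed.

Lemma diss_ge0 n (e : rel 'I_n) (w : 'I_n -> 'I_n -> R) (a : R) (v : 'cV[R]_n) :
  simple_graph e -> edge_weights e w -> 0 < a -> (forall k, 0 < v k 0) ->
  0 <= diss e w a v /\
  (diss e w a v = 0 -> forall k j, e k j -> v k 0 = v j 0).
Proof.
move=> sg ew a0 vp.
have ew' := ew; case: ew' => [wsym wpos].
have hG : forall k j, 0 <= (if e k j then
      w k j * ((v k 0 - v j 0) * (ln (v k 0 / a) - ln (v j 0 / a))) else 0).
  move=> k j; case ekj: (e k j) => //.
  by apply: mulr_ge0; [exact: ltW (wpos _ _ ekj) | exact: term_ge0].
have D := diss2 a v sg ew.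
split.
  have h2 : 0 <= diss e w a v *+ 2.
    by rewrite D; apply: sumr_ge0 => k _; apply: sumr_ge0 => j _.
  by move: h2; rewrite mulr2n; lra.
move=> d0 k j ekj.
move: D; rewrite d0 mul0rn => /esym D.
have hS : forall k : 'I_n, true -> 0 <= \sum_j (if e k j then
      w k j * ((v k 0 - v j 0) * (ln (v k 0 / a) - ln (v j 0 / a))) else 0).
  by move=> k' _; apply: sumr_ge0 => j' _.
have := psumr_eq0P hS D (i:=k) isT.
move=> D2; have := psumr_eq0P (fun j _ => hG k j) D2 (i:=j) isT.
rewrite ekj => /eqP; rewrite mulf_eq0 gt_eqF ?wpos //= => /eqP.
exact: term_eq0.
Qed.

Lemma conn_eq n (e : rel 'I_n) (f : 'I_n -> R) :
  connected_graph e -> (forall k j, e k j -> f k = f j) -> forall i j, f i = f j.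
Proof.
move=> con H i j; have /connectP [p pp ->] := con i j.
elim: p i pp => [|k p IH] i //= /andP [eik pk].
by rewrite (H _ _ eik) IH.
Qed.

Lemma consensus_of n (v : 'cV[R]_n) : (forall i j, v i 0 = v j 0) -> consensus v.
Proof.
case: n v => [|m] v H.
  by exists 0; apply/matrixP => i; case: i.
exists (v ord0 0); apply/matrixP => i j; rewrite (ord1 j) mxE; exact: H.
Qed.

Lemma gradE n (a : R) (y : 'cV[R]_n) k : 0 < a -> (forall k, 0 < y k 0) ->
  (grad (@Vgibbs R n a) y) k 0 = ln (y k 0 / a).
Proof.
move=> a0 yp; rewrite /grad mxE.
rewrite (@derive_val _ _ _ _ _ _ _ (DV (delta_mx k 0) a0 yp)).
rewrite (bigD1 k) //= big1 ?addr0 => [|m mk]; rewrite mxE.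
  by rewrite !eqxx mulr1.
by rewrite (negPf mk) mulr0.
Qed.

Lemma logmean_prop (p q : R) : 0 < p -> 0 < q ->
  logmean p q * (ln p - ln q) = p - q.
Proof.
move=> p0 q0; rewrite /logmean; case: eqP => [->|pq].
  by rewrite !subrr mulr0.
rewrite divfK // subr_eq0; apply/eqP => /ln_inj H; apply: pq; apply: H;
  by rewrite posrE.
Qed.

Lemma part2 n (e : rel 'I_n) (w : 'I_n -> 'I_n -> R) (a : R) (x : 'cV[R]_n) :
  simple_graph e -> 0 < a -> @Mset R n a x ->
  - (laplacian e w *m x) = - (Ginv_gibbs e w a x *m grad (Vgibbs a) x).
Proof.
move=> [_ eirr] a0 [xp _]; congr (- _); apply/matrixP => i j.
rewrite (ord1 j) /Ginv_gibbs !lap_apply //; apply: eq_bigr => k _.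
rewrite !gradE // -mulrA logmean_prop ?divr_gt0 //; field.
exact: lt0r_neq0.
Qed.

Lemma part1 n (e : rel 'I_n) (w : 'I_n -> 'I_n -> R) (a : R) :
  simple_graph e -> connected_graph e -> edge_weights e w -> 0 < a ->
  strict_lyapunov (laplacian e w) a (Vgibbs a).
Proof.
move=> sg con ew a0 x tr [xp _] ncons t t0.
have sg' := sg; case: sg' => [_ eirr].
have pos := traj_pos sg ew tr xp.
set g := fun s => Vgibbs a (x s).
have gd : forall s : R, 0 < s -> is_derive s 1 g (- diss e w a (x s)).
  move=> s s0.
  have [dx dv] := tr.2 s s0.
  have dfx : differentiable x s by apply/derivable1_diffP.
  have dV := DV_diff a0 (pos s (ltW s0)).
  have dg : differentiable g s by exact: differentiable_comp.
  apply: DeriveDef; first exact/derivable1_diffP.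
  rewrite deriveE // /g -/((Vgibbs a) \o x) diff_comp // /=.
  rewrite -(@deriveE _ _ _ x s 1 dfx) -derive1E dv -(@deriveE _ _ _ _ _ _ dV).
  rewrite (@derive_val _ _ _ _ _ _ _ (DV (- (laplacian e w *m x s)) a0 (pos s (ltW s0)))).
  rewrite /diss -sumrN; apply: eq_bigr => k _; rewrite mxE mulrN //.
have gcont : forall u, {within `[0, u], continuous g}.
  move=> u; have -> : g = (Vgibbs a) \o x by [].
  apply: (within_comp _ tr.1).
    by move=> s; rewrite /= !in_itv /= => /andP [->].
  move=> s; rewrite /= in_itv /= => /andP [s0 _].
  exact/differentiable_continuous/(DV_diff a0 (pos s s0)).
have gdle : forall s : R, 0 < s -> g^`() s <= 0.
  move=> s s0; rewrite derive1E (@derive_val _ _ _ _ _ _ _ (gd s s0)) oppr_le0.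
  exact: (diss_ge0 sg ew a0 (pos s (ltW s0))).1.
have gle : forall u v, 0 <= u -> u <= v -> v <= t -> g v <= g u.
  move=> u v u0 uv vt.
  apply: (@ler0_derive1_nincr R g 0 t) => //.
    by move=> s; rewrite in_itv /= => /andP [s0 _]; case: (gd s s0).
  by move=> s; rewrite in_itv /= => /andP [s0 _]; exact: gdle.
rewrite lt_neqAle gle ?lexx ?ltW // andbT; apply/eqP => gt0.
apply: ncons.
have gconst : forall s : R, 0 < s -> s < t -> g s = g 0.
  move=> s s0 st.
  have h1 := gle 0 s (lexx _) (ltW s0) (ltW st).
  have h2 := gle s t (ltW s0) (ltW st) (lexx _).
  by move: h1 h2; rewrite /g gt0 => h1 h2; apply/eqP; rewrite eq_le h1 h2.
have cons_s : forall s : R, 0 < s -> s < t -> forall i j, x s i 0 = x s j 0.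
  move=> s s0 st.
  have D0 : diss e w a (x s) = 0.
    have : 'D_1 g s = 'D_1 (cst (g 0)) s.
      apply: near_eq_derive.
      have := @near_in_itvoo R 0 t s; rewrite in_itv /= s0 st => /(_ isT).
      apply: filterS => u; rewrite in_itv /= => /andP [u0 ut].
      by rewrite gconst.
    rewrite (@derive_val _ _ _ _ _ _ _ (gd s s0)) derive_cst => /eqP.
    by rewrite oppr_eq0 => /eqP.
  have := (diss_ge0 sg ew a0 (pos s (ltW s0))).2 D0.
  exact: conn_eq.
have dX0 : forall s : R, 0 < s -> s < t -> forall i,
    is_derive s 1 (fun u => x u i 0) 0.
  move=> s s0 st i; have [dx dv] := traj_coord i tr s0.
  apply: DeriveDef => //; rewrite -derive1E dv lap_apply //.
  rewrite big1 ?oppr0 // => k _; rewrite (cons_s s s0 st i k) subrr mulr0 //.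
apply: consensus_of => i j.
have t2 : 0 < t / 2 by rewrite divr_gt0.
have t2t : t / 2 < t by rewrite ltr_pdivrMr // ltr_pMr // ltr1n.
have eq0 : forall i, x 0 i 0 = x (t / 2) i 0.
  move=> i'.
  have hd : forall s, s \in `]0, t / 2[%R -> is_derive s 1 (fun u => x u i' 0) 0.
    move=> s; rewrite in_itv /= => /andP [s0 st2]; apply: dX0 => //.
    exact: lt_trans st2 t2t.
  have hc : {within `[0, t / 2], continuous (fun u => x u i' 0)}.
    apply: continuous_subspaceW (@traj_cont _ _ _ i' tr).
    by move=> s; rewrite /= !in_itv /= => /andP [->].
  have [c _ H] := @MVT_segment R (fun u => x u i' 0) (fun _ => 0) 0 (t / 2)
    (ltW t2) hd hc.
  by apply/eqP; rewrite eq_sym -subr_eq0 H mul0r.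
by rewrite !eq0; apply: cons_s.
Qed.
End S.

Unset Implicit Arguments.
Set Strict Implicit.

Theorem corollary1 (R : realType) (n : nat) (e : rel 'I_n)
  (w : 'I_n -> 'I_n -> R) (a : R) :
  simple_graph e -> connected_graph e -> edge_weights e w -> 0 < a ->
  strict_lyapunov (laplacian e w) a (Vgibbs a) /\
  (forall x : 'cV[R]_n, @Mset R n a x ->
     - (laplacian e w *m x) = - (Ginv_gibbs e w a x *m grad (Vgibbs a) x)).
Proof.
move=> sg con ew a0; split; first exact: part1.
by move=> x hx; apply: part2.
Qed.
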